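(* Suppose Assumption 1 holds, and suppose expert knowledge gives $\rho(x)\ge\tilde\rho_L(x)$ for a pre-specified function $\tilde\rho_L$. Let $\bar\rho(x)=\max\{\tilde\rho_L(x),\rho_L(x)\}$. Then the sharp upper bound on $\mathrm{THR}(x)$ is $$\overline{\mathrm{THR}}_U(x)=\max\Big\{\mu_0(x)\{1-\mu_1(x)\}-\bar\rho(x)\sqrt{\mu_0(x)\{1-\mu_0(x)\}\mu_1(x)\{1-\mu_1(x)\}},\ 0\Big\}.$$ Moreover, $\overline{\mathrm{THR}}_U(x)$ is not greater than the Fréchet–Hoeffding upper bound $\min\{\mu_0(x),1-\mu_1(x)\}$ that holds under Assumption 1 alone.
   Context: Setting. Tuples $\{X,A,Y(1),Y(0)\}$ are drawn from a superpopulation, with binary treatment $A$ and binary potential outcomes $Y(a)\in\{0,1\}$. The observed outcome is $Y=AY(1)+(1-A)Y(0)$. Assumption 1: (i) $\{Y(0),Y(1)\}\perp\!\!\!\perp A\mid X$; (ii) $\epsilon<\mathbb{P}(A=1\mid X=x)<1-\epsilon$ for all $x$, for some constant $0<\epsilon<1/2$. Notation: - $\mu_a(x)=\mathbb{E}(Y\mid A=a,X=x)$. - $\mathrm{THR}(x)=\mathbb{P}(Y(0)=1,Y(1)=0\mid X=x)$. - $\rho(x)=\mathrm{Corr}(Y(0),Y(1)\mid X=x)$, defined where $0<\mu_a(x)<1$. - $\rho_L(x)=-\min\{\{1-\mu_0(x)\}\{1-\mu_1(x)\},\mu_0(x)\mu_1(x)\}\big/\sqrt{\mu_0(x)\{1-\mu_0(x)\}\mu_1(x)\{1-\mu_1(x)\}}$.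 ''Sharp upper bound'' means: $\mathrm{THR}(x)\le\overline{\mathrm{THR}}_U(x)$ for every joint distribution of potential outcomes compatible with the observed data, Assumption 1, and the constraint $\rho(x)\ge\tilde\rho_L(x)$; and this value is attained by some such distribution. *)

(* Defs.v *)
From HB Require Import structures.
From mathcomp Require Import all_boot all_order all_algebra.
From mathcomp Require Import reals.
Set Implicit Arguments. Unset Strict Implicit. Unset Printing Implicit Defensive.
Import Order.TTheory GRing.Theory Num.Theory.
Local Open Scope ring_scope.

(* Everything is conditional on a fixed covariate value X = x.
   - A "full law" q : bool -> bool -> bool -> R is the conditional joint pmf
     q y0 y1 a = P(Y(0)=y0, Y(1)=y1, A=a | X=x).
   - An "observed law" o : bool -> bool -> R is the conditional pmf of the
     observed data o a y = P(A=a, Y=y | X=x). *)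

Section Defs.
Variable R : realType.

Definition full_law (q : bool -> bool -> bool -> R) : Prop :=
  (forall y0 y1 a, 0 <= q y0 y1 a) /\
  \sum_(y0 : bool) \sum_(y1 : bool) \sum_(a : bool) q y0 y1 a = 1.

Definition obs_law (o : bool -> bool -> R) : Prop :=
  (forall a y, 0 <= o a y) /\ \sum_(a : bool) \sum_(y : bool) o a y = 1.

Definition mu (o : bool -> bool -> R) (a : bool) : R :=
  o a true / (o a false + o a true).

(* The full law induces the observed law through Y = A Y(1) + (1-A) Y(0). *)
Definition induces (q : bool -> bool -> bool -> R) (o : bool -> bool -> R) : Prop :=
  forall a y, o a y =
    \sum_(y0 : bool) \sum_(y1 : bool)
      (if (if a then y1 else y0) == y then q y0 y1 a else 0).

Definition pY (q : bool -> bool -> bool -> R) (y0 y1 : bool) : R :=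
  \sum_(a : bool) q y0 y1 a.

Definition pA (q : bool -> bool -> bool -> R) (a : bool) : R :=
  \sum_(y0 : bool) \sum_(y1 : bool) q y0 y1 a.

(* Assumption 1(i) at x: {Y(0),Y(1)} independent of A given X = x *)
Definition unconfounded (q : bool -> bool -> bool -> R) : Prop :=
  forall y0 y1 a, q y0 y1 a = pY q y0 y1 * pA q a.

Definition positivity (eps : R) (q : bool -> bool -> bool -> R) : Prop :=
  eps < pA q true < 1 - eps.

Definition THR (q : bool -> bool -> bool -> R) : R := pY q true false.

Definition corr (q : bool -> bool -> bool -> R) : R :=
  let m0 := pY q true false + pY q true true in
  let m1 := pY q false true + pY q true true in
  (pY q true true - m0 * m1) / Num.sqrt (m0 * (1 - m0) * (m1 * (1 - m1))).

Definition sdprod (m0 m1 : R) : R :=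
  Num.sqrt (m0 * (1 - m0) * m1 * (1 - m1)).

Definition rhoL (m0 m1 : R) : R :=
  - Num.min ((1 - m0) * (1 - m1)) (m0 * m1) / sdprod m0 m1.

(* compatibility with observed data, Assumption 1 and rho(x) >= rhot *)
Definition compatible (eps rhot : R) (o : bool -> bool -> R)
    (q : bool -> bool -> bool -> R) : Prop :=
  [/\ full_law q, induces q o, unconfounded q, positivity eps q & rhot <= corr q].

Definition THR_U (rhot m0 m1 : R) : R :=
  Num.max (m0 * (1 - m1) - Num.max rhot (rhoL m0 m1) * sdprod m0 m1) 0.

End Defs.

(* Main.v *)
Require Import Defs.
From HB Require Import structures.
From mathcomp Require Import all_boot all_order all_algebra.
From mathcomp Require Import reals.
From mathcomp Require Import ring lra.
Import Order.TTheory GRing.Theory Num.Theory.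
Local Open Scope ring_scope.

Section H.
Context {R : realType}.

Lemma corr_eq (q : bool -> bool -> bool -> R) a b :
  pY q true false + pY q true true = a ->
  pY q false true + pY q true true = b ->
  corr q = (pY q true true - a * b) / sdprod a b.
Proof. by move=> ha hb; rewrite /corr /sdprod /= ha hb !mulrA. Qed.

Lemma divE (n d z P : R) : d = P -> 0 < P -> n = z * P -> n / d = z.
Proof. by move=> -> hd ->; rewrite mulfK // lt0r_neq0. Qed.

Lemma facts (eps rhot : R) o q : 0 < eps -> compatible eps rhot o q ->
  [/\ (forall y0 y1, 0 <= pY q y0 y1),
      pY q false false + pY q false true + pY q true false + pY q true true = 1,
      mu o false = pY q true false + pY q true true,
      mu o true = pY q false true + pY q true true &
      [/\ eps < pA q true < 1 - eps, pA q false = 1 - pA q true,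
          rhot <= corr q &
          [/\ o false true = mu o false * pA q false,
          o false false = (1 - mu o false) * pA q false,
          o true true = mu o true * pA q true &
          o true false = (1 - mu o true) * pA q true]]].
Proof.
move=> he; case=> [[q0 qs] ind unc pos cr].
have pYge : forall y0 y1, 0 <= pY q y0 y1.
  by move=> y0 y1; rewrite /pY big_bool /= addr_ge0.
have sum1 : pY q false false + pY q false true + pY q true false + pY q true true = 1.
  by rewrite /pY !big_bool /= -qs !big_bool /=; ring.
have pAf : pA q false = 1 - pA q true.
  by rewrite /pA -qs !big_bool /=; ring.
have o00 := ind false false; have o01 := ind false true.
have o10 := ind true false; have o11 := ind true true.
rewrite !big_bool /= in o00 o01 o10 o11.
rewrite (unc false false false) (unc false true false) in o00.
rewrite (unc true false false) (unc true true false) in o01.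
rewrite (unc false false true) (unc true false true) in o10.
rewrite (unc false true true) (unc true true true) in o11.
move: pos; rewrite /positivity => pos.
have Pa : 0 < pA q true by case/andP: pos => h _; lra.
have Pb : 0 < pA q false by rewrite pAf; case/andP: pos => _ h; lra.
have hb : pY q false false * pA q false + pY q false true * pA q false +
   pY q true false * pA q false + pY q true true * pA q false = pA q false.
  by rewrite -!mulrDl sum1 mul1r.
have ha : pY q false false * pA q true + pY q false true * pA q true +
   pY q true false * pA q true + pY q true true * pA q true = pA q true.
  by rewrite -!mulrDl sum1 mul1r.
have m0E : mu o false = pY q true false + pY q true true.
  rewrite /mu o00 o01; apply: (@divE _ _ _ (pA q false)) => //; [lra | ring].
have m1E : mu o true = pY q false true + pY q true true.
  rewrite /mu o10 o11; apply: (@divE _ _ _ (pA q true)) => //; [lra | ring].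
split=> //; split=> //; split.
- by rewrite o01 m0E; ring.
- by rewrite o00 m0E; rewrite -sum1; ring.
- by rewrite o11 m1E; ring.
- by rewrite o10 m1E -sum1; ring.
Qed.


Lemma maxP' (x y : R) :
  [/\ x <= Num.max x y, y <= Num.max x y & (Num.max x y = x \/ Num.max x y = y)].
Proof.
rewrite /Num.max; case: (boolP (x < y)) => h.
  by split => //; [exact: ltW | right].
by split => //; [rewrite leNgt | left].
Qed.

Lemma minP' (x y : R) :
  [/\ Num.min x y <= x, Num.min x y <= y & (Num.min x y = x \/ Num.min x y = y)].
Proof.
rewrite /Num.min; case: (boolP (x < y)) => h.
  by split => //; [exact: ltW | left].
by split => //; [rewrite leNgt | right].
Qed.

Definition pp (U m0 m1 : R) (y0 y1 : bool) : R :=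
  if y0 then (if y1 then m0 - U else U) else (if y1 then m1 - m0 + U else 1 - m1 - U).
Definition qq (U m0 m1 : R) (pa : bool -> R) y0 y1 a := pp U m0 m1 y0 y1 * pa a.

Lemma pY_qq U m0 m1 pa y0 y1 :
  pY (qq U m0 m1 pa) y0 y1 = pp U m0 m1 y0 y1 * (pa true + pa false).
Proof. by rewrite /pY big_bool /= /qq mulrDr. Qed.

Lemma pA_qq U m0 m1 pa a : pA (qq U m0 m1 pa) a = pa a.
Proof. by rewrite /pA !big_bool /= /qq /pp; ring. Qed.

End H.

Theorem proposition1 (R : realType) (eps rhot : R) (o : bool -> bool -> R) :
  0 < eps -> eps < 1 / 2 ->
  obs_law o ->
  0 < mu o false < 1 -> 0 < mu o true < 1 ->
  let U := THR_U rhot (mu o false) (mu o true) in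
  [/\ (forall q, compatible eps rhot o q -> THR q <= U),
      ((exists q, compatible eps rhot o q) ->
         exists q, compatible eps rhot o q /\ THR q = U)
    & U <= Num.min (mu o false) (1 - mu o true)].
Proof.
move=> he he2 ol /andP[m0p m0l] /andP[m1p m1l] U.
have sp : 0 < sdprod (mu o false) (mu o true).
  rewrite /sdprod sqrtr_gt0; apply: mulr_gt0; [apply: mulr_gt0; [apply: mulr_gt0|]|]; lra.
have rLs : rhoL (mu o false) (mu o true) * sdprod (mu o false) (mu o true) =
   - Num.min ((1 - mu o false) * (1 - mu o true)) (mu o false * mu o true).
  by rewrite /rhoL divfK // lt0r_neq0.
have UE : U = Num.max (mu o false * (1 - mu o true) -
   Num.max rhot (rhoL (mu o false) (mu o true)) * sdprod (mu o false) (mu o true)) 0 by [].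
clearbody U.
have [Mx1 Mx2 Mx3] := maxP' rhot (rhoL (mu o false) (mu o true)).
have [Ux1 Ux2 Ux3] := maxP' (mu o false * (1 - mu o true) -
   Num.max rhot (rhoL (mu o false) (mu o true)) * sdprod (mu o false) (mu o true)) 0.
have [Mn1 Mn2 Mn3] := minP' ((1 - mu o false) * (1 - mu o true)) (mu o false * mu o true).
rewrite -UE in Ux1 Ux2 Ux3.
move: m0p m0l m1p m1l rLs Mx1 Mx2 Mx3 Ux1 Ux2 Ux3 Mn1 Mn2 Mn3 UE sp.
set m0 := mu o false; set m1 := mu o true; set s := sdprod m0 m1.
set r := rhoL m0 m1; set M := Num.max rhot r.
set mn := Num.min _ _.
move=> m0p m0l m1p m1l rLs Mx1 Mx2 Mx3 Ux1 Ux2 Ux3 Mn1 Mn2 Mn3 UE sp.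
have Ms1 : rhot * s <= M * s by rewrite ler_pM2r.
have Ms2 : r * s <= M * s by rewrite ler_pM2r.
have Ms3 : M * s = rhot * s \/ M * s = r * s by case: Mx3 => ->; [left|right].
have [Ub1 Ub2 Ub3] := minP' m0 (1 - m1).
have Ub : U <= Num.min m0 (1 - m1).
  case: Ub3 => ->.
  - case: Ux3 => ->; last lra.
    case: Mn3 => hm; rewrite hm in rLs Mn1 Mn2; nra.
  - case: Ux3 => ->; last lra.
    case: Mn3 => hm; rewrite hm in rLs Mn1 Mn2; nra.
split => //.
- move=> q cq.
  have [pge s1 m0E m1E [pos pAf cr _]] := facts _ _ _ _ he cq.
  move: m0E m1E; rewrite -/m0 -/m1 => m0E m1E.
  rewrite (corr_eq _ _ _ (esym m0E) (esym m1E)) -/s ler_pdivlMr // in cr.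
  rewrite /THR.
  have := pge false false; have := pge false true; have := pge true false;
    have := pge true true.
  case: Mn3 => hm; rewrite hm in rLs Mn1 Mn2; case: Ms3 => hM; nra.
- case=> q0 cq0.
  have [pge s1 m0E m1E [pos pAf cr [o01 o00 o11 o10]]] := facts _ _ _ _ he cq0.
  move: m0E m1E o01 o00 o11 o10; rewrite -/m0 -/m1 => m0E m1E o01 o00 o11 o10.
  rewrite (corr_eq _ _ _ (esym m0E) (esym m1E)) -/s ler_pdivlMr // in cr.
  have := pge false false; have := pge false true; have := pge true false;
    have := pge true true => g11 g10 g01 g00.
  have U3 : m0 - m1 <= U.
    case: Ux3 => hU; rewrite hU; case: Mn3 => hm; rewrite hm in rLs Mn1 Mn2;
      case: Ms3 => hM; nra.
  have cr' : rhot * s <= m0 - U - m0 * m1.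
    case: Ux3 => hU; rewrite hU; case: Mn3 => hm; rewrite hm in rLs Mn1 Mn2;
      case: Ms3 => hM; nra.
  have sA : pA q0 true + pA q0 false = 1 by rewrite pAf; ring.
  exists (qq U m0 m1 (pA q0)); split; last first.
    by rewrite /THR pY_qq sA mulr1.
  split.
  + split.
    * have pAge : forall a, 0 <= pA q0 a.
        by case; [|rewrite pAf]; case/andP: pos => ? ?; lra.
      by move=> [] [] a; apply: mulr_ge0 (pAge a); rewrite /pp; lra.
    * by rewrite !big_bool /= /qq /pp pAf; ring.
  + move=> [] [] /=; rewrite !big_bool /= /qq /pp ?o01 ?o00 ?o11 ?o10 -/m0 -/m1; ring.
  + by move=> y0 y1 a; rewrite pA_qq pY_qq sA mulr1.
  + by rewrite /positivity pA_qq.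
  + rewrite (@corr_eq _ _ m0 m1); last 2 first.
    * by rewrite !pY_qq sA !mulr1 /pp; ring.
    * by rewrite !pY_qq sA !mulr1 /pp; ring.
    by rewrite pY_qq sA mulr1 /pp ler_pdivlMr.
Qed.
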